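(* For every $r\ge2$ there exists $\tilde k\in\mathbb{N}$ such that for every commutative ring $R$, all columns $b^+=(b_1,\ldots,b_r)^t\in R^r$ and $b^-=(b_{-r},\ldots,b_{-1})^t\in R^r$ with $\sum_{i=1}^rb_ib_{-i}=0$, and every $s\in\langle b_1,\ldots,b_r\rangle\trianglelefteq R$, there exists $M\in\Theta(r,R)$ such that $s^{\tilde k}b^-=Mb^+$.
   Context: For an $r\times r$ matrix $g$ with rows and columns indexed $1,\ldots,r$, its antidiagonal transpose $g^{\tau}$ has entries $(g^\tau)_{i,j}=g_{r+1-j,r+1-i}$. $\Theta(r,R)$ is the set of $r\times r$ matrices $M$ over $R$ with $M^{\tau}=-M$ and all antidiagonal entries $M_{i,r+1-i}$ equal to zero. *)

(* Defs.v *)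
From mathcomp Require Import all_boot all_algebra.
Set Implicit Arguments. Unset Strict Implicit. Unset Printing Implicit Defensive.
Import GRing.Theory.
Local Open Scope ring_scope.

(* Indices 1..r are represented by 'I_r = {0..r-1}; the index r+1-i
   corresponds to rev_ord i. *)

Definition antidiag_tr (R : Type) (r : nat) (g : 'M[R]_r) : 'M[R]_r :=
  \matrix_(i < r, j < r) g (rev_ord j) (rev_ord i).

Definition Theta (R : pzRingType) (r : nat) (M : 'M[R]_r) : Prop :=
  antidiag_tr M = - M /\ (forall i : 'I_r, M i (rev_ord i) = 0).

(* Main.v *)
Require Import Defs.
From mathcomp Require Import all_boot all_algebra.
Import GRing.Theory.
Local Open Scope ring_scope.

Definition Mdef {R : comPzRingType} {r : nat} (bm : 'cV[R]_r) (a : 'I_r -> R) : 'M[R]_r :=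
  \matrix_(p, q) (bm p 0 * a q - a (rev_ord p) * bm (rev_ord q) 0).

Lemma MdefE {R : comPzRingType} {r : nat} (bm : 'cV[R]_r) (a : 'I_r -> R) (p q : 'I_r) :
  Mdef bm a p q = bm p 0 * a q - a (rev_ord p) * bm (rev_ord q) 0.
Proof. by rewrite mxE. Qed.

Theorem lemma10 : forall r : nat, (2 <= r)%N ->
  exists kt : nat,
    forall (R : comPzRingType) (bp bm : 'cV[R]_r),
      \sum_(i < r) bp i 0 * bm (rev_ord i) 0 = 0 ->
      forall s : R, (exists c : 'I_r -> R, s = \sum_(i < r) c i * bp i 0) ->
      exists M : 'M[R]_r, Theta M /\ s ^+ kt *: bm = M *m bp.
Proof.
move=> r _; exists 1%N => R bp bm H0 s [a ->].
exists (Mdef bm a).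
split; [split|].
- apply/matrixP => i j; rewrite mxE [RHS]mxE !MdefE !rev_ordK.
  by rewrite opprB [bm (rev_ord j) 0 * _]mulrC [a j * _]mulrC.
- by move=> i; rewrite MdefE rev_ordK mulrC subrr.
- apply/matrixP => p q; rewrite ord1 mxE [RHS]mxE expr1.
  rewrite [RHS](eq_bigr (fun j => bm p 0 * a j * bp j 0 - a (rev_ord p) * bm (rev_ord j) 0 * bp j 0)); last first.
    by move=> j _; rewrite MdefE mulrBl.
  rewrite sumrB.
  have -> : \sum_(j < r) a (rev_ord p) * bm (rev_ord j) 0 * bp j 0 = 0.
    rewrite -[RHS](mulr0 (a (rev_ord p))) -[in RHS]H0 mulr_sumr.
    apply eq_bigr => j _. by rewrite -mulrA [bm _ _ * _]mulrC.
  rewrite subr0 mulr_suml; apply: eq_bigr => j _.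
  by rewrite mulrC mulrA.
Qed.
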